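(* Let $l:\mathbb{R}\times\mathbb{R}\to\mathbb{R}$ be doubly convex (jointly convex), i.e. $l(\mu u_1+(1-\mu)u_2,\mu v_1+(1-\mu)v_2)\le\mu\,l(u_1,v_1)+(1-\mu)\,l(u_2,v_2)$ for all $u_i,v_i$ and $\mu\in[0,1]$, and let $f:\mathbb{X}\to\mathbb{R}$ be such that all expected $k$-risks below are finite. Then for all integers $1\le k\le k'$, $$r_k(f,\mathcal{D})\ge r_{k'}(f,\mathcal{D}).$$
   Context: Let $\mathcal{D}$ be a probability distribution on $\mathbb{Z}=\mathbb{X}\times\mathbb{Y}$, $\mathbb{Y}\subset\mathbb{R}$. For a finite family $S$ and function $g$, $\hat{E}_S[g(z)]=\frac{1}{|S|}\sum_{z\in S}g(z)$. The expected $k$-risk is $r_k(f,\mathcal{D})=\mathbb{E}_{S\sim\mathcal{D}^k}\big[l(\hat{E}_S[f(x)],\hat{E}_S[y])\big]$ where $S=(z_1,\dots,z_k)$ consists of $k$ i.i.d. draws from $\mathcal{D}$. *)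

(* Defs.v *)
From HB Require Import structures.
From mathcomp Require Import all_boot all_order all_algebra.
From mathcomp Require Import all_classical all_reals all_analysis.
Set Implicit Arguments. Unset Strict Implicit. Unset Printing Implicit Defensive.
Import Order.TTheory GRing.Theory Num.Theory.
Local Open Scope classical_set_scope.
Local Open Scope ring_scope.

Definition doubly_convex (R : realType) (l : R -> R -> R) : Prop :=
  forall (u1 u2 v1 v2 mu : R), 0 <= mu <= 1 ->
    l (mu * u1 + (1 - mu) * u2) (mu * v1 + (1 - mu) * v2)
    <= mu * l u1 v1 + (1 - mu) * l u2 v2.

Definition emp_mean (R : realType) (k : nat) (g : nat -> R) : R :=
  (k%:R)^-1 * \sum_(i < k) g i.

Definition mutually_independent (R : realType) (dO : measure_display)
    (Omega : measurableType dO) (P : probability Omega R)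
    (dU : measure_display) (U : measurableType dU) (Z : nat -> Omega -> U) : Prop :=
  forall (s : seq nat) (A : nat -> set U), uniq s ->
    (forall i, i \in s -> measurable (A i)) ->
    P (\big[setI/setT]_(i <- s) (Z i @^-1` A i)) =
    (\prod_(i <- s) P (Z i @^-1` A i))%E.

Definition iid_draws (R : realType) (dO : measure_display)
    (Omega : measurableType dO) (P : probability Omega R)
    (dU : measure_display) (U : measurableType dU) (D : probability U R)
    (Z : nat -> Omega -> U) : Prop :=
  (forall i, measurable_fun setT (Z i)) /\
  (forall i (A : set U), measurable A -> P (Z i @^-1` A) = D A) /\
  mutually_independent P Z.

Definition k_loss (R : realType) (dO : measure_display) (Omega : measurableType dO)
    (dX : measure_display) (X : measurableType dX)
    (Z : nat -> Omega -> (X * R)%type) (l : R -> R -> R) (f : X -> R) (k : nat)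
    : Omega -> R :=
  fun w => l (emp_mean k (fun i => f (Z i w).1)) (emp_mean k (fun i => (Z i w).2)).

(** Expected k-risk r_k(f, D) = E_{S ~ D^k}[ l(\hat E_S[f(x)], \hat E_S[y]) ],
    computed with S = (Z 0, ..., Z (k-1)) for an i.i.d. sequence Z of law D. *)
Definition k_risk (R : realType) (dO : measure_display) (Omega : measurableType dO)
    (P : probability Omega R) (dX : measure_display) (X : measurableType dX)
    (Z : nat -> Omega -> (X * R)%type) (l : R -> R -> R) (f : X -> R) (k : nat)
    : \bar R :=
  'E_P[k_loss Z l f k].

(* Main.v *)
Require Import Defs.
From HB Require Import structures.
From mathcomp Require Import all_boot all_order all_algebra.
From mathcomp Require Import all_classical all_reals all_analysis.
From mathcomp Require Import ring lra zify measurable_realfun.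
Import Order.TTheory GRing.Theory Num.Theory.
Local Open Scope classical_set_scope.
Local Open Scope ring_scope.


Section conv.
Context (R : realType) (l : R -> R -> R) (hl : doubly_convex l).

Definition Mbox u v := `|l (u+1) (v+1)| + `|l (u+1) (v-1)| + `|l (u-1) (v+1)| + `|l (u-1) (v-1)|.

Lemma conv_le (M a b mu : R) : 0 <= mu <= 1 -> a <= M -> b <= M -> mu * a + (1 - mu) * b <= M.
Proof. move=> /andP[h0 h1] ha hb; nra. Qed.

Lemma box_upper u v s t : `|s| <= 1 -> `|t| <= 1 -> l (u + s) (v + t) <= Mbox u v.
Proof.
move=> hs ht.
have h1 : l (u+1) (v+1) <= Mbox u v.
  have := ler_norm (l (u+1) (v+1)).
  rewrite /Mbox.
  have := normr_ge0 (l (u + 1) (v - 1)); have := normr_ge0 (l (u - 1) (v + 1)); have := normr_ge0 (l (u - 1) (v - 1)); lra.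
have h2 : l (u+1) (v-1) <= Mbox u v.
  have := ler_norm (l (u+1) (v-1)).
  rewrite /Mbox.
  have := normr_ge0 (l (u + 1) (v + 1)); have := normr_ge0 (l (u - 1) (v + 1)); have := normr_ge0 (l (u - 1) (v - 1)); lra.
have h3 : l (u-1) (v+1) <= Mbox u v.
  have := ler_norm (l (u-1) (v+1)).
  rewrite /Mbox.
  have := normr_ge0 (l (u + 1) (v + 1)); have := normr_ge0 (l (u + 1) (v - 1)); have := normr_ge0 (l (u - 1) (v - 1)); lra.
have h4 : l (u-1) (v-1) <= Mbox u v.
  have := ler_norm (l (u-1) (v-1)).
  rewrite /Mbox.
  have := normr_ge0 (l (u + 1) (v + 1)); have := normr_ge0 (l (u + 1) (v - 1)); have := normr_ge0 (l (u - 1) (v + 1)); lra.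
move: hs ht; rewrite !ler_norml => /andP[hs1 hs2] /andP[ht1 ht2].
set nu := (1 + s) / 2. set mu := (1 + t) / 2.
have hnu : 0 <= nu <= 1 by apply/andP; rewrite /nu; split; lra.
have hmu : 0 <= mu <= 1 by apply/andP; rewrite /mu; split; lra.
have top : l (u + s) (v + 1) <= Mbox u v.
  have := hl (u+1) (u-1) (v+1) (v+1) nu hnu.
  have -> : nu * (u + 1) + (1 - nu) * (u - 1) = u + s by rewrite /nu; field.
  have -> : nu * (v + 1) + (1 - nu) * (v + 1) = v + 1 by rewrite /nu; field.
  move=> H; apply: le_trans H _; exact: conv_le.
have bot : l (u + s) (v - 1) <= Mbox u v.
  have := hl (u+1) (u-1) (v-1) (v-1) nu hnu.
  have -> : nu * (u + 1) + (1 - nu) * (u - 1) = u + s by rewrite /nu; field.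
  have -> : nu * (v - 1) + (1 - nu) * (v - 1) = v - 1 by rewrite /nu; field.
  move=> H; apply: le_trans H _; exact: conv_le.
have := hl (u+s) (u+s) (v+1) (v-1) mu hmu.
have -> : mu * (u + s) + (1 - mu) * (u + s) = u + s by rewrite /mu; field.
have -> : mu * (v + 1) + (1 - mu) * (v - 1) = v + t by rewrite /mu; field.
move=> H; apply: le_trans H _; exact: conv_le.
Qed.

Lemma local_bound u v s t r : 0 < r <= 1 -> `|s| <= r -> `|t| <= r ->
  `|l (u + s) (v + t) - l u v| <= r * (Mbox u v - l u v).
Proof.
move=> /andP[r0 r1] hs ht.
have hM : forall s t, `|s| <= r -> `|t| <= r -> l (u + s) (v + t) <= l u v + r * (Mbox u v - l u v).
  move=> s' t' hs' ht'.
  have hr : 0 <= r <= 1 by apply/andP; split; lra.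
  have := hl (u + s'/r) u (v + t'/r) v r hr.
  have -> : r * (u + s' / r) + (1 - r) * u = u + s' by field; exact: lt0r_neq0.
  have -> : r * (v + t' / r) + (1 - r) * v = v + t' by field; exact: lt0r_neq0.
  have B : l (u + s'/r) (v + t'/r) <= Mbox u v.
    apply: box_upper.
      by rewrite normrM normfV (gtr0_norm r0) ler_pdivrMr // mul1r.
    by rewrite normrM normfV (gtr0_norm r0) ler_pdivrMr // mul1r.
  move=> H; apply: le_trans H _; nra.
have up := hM s t hs ht.
have dn := hM (-s) (-t) ltac:(by rewrite normrN) ltac:(by rewrite normrN).
have hh : 0 <= (2:R)^-1 <= 1 by apply/andP; split; lra.
have := hl (u + s) (u - s) (v + t) (v - t) 2^-1 hh.
have -> : 2^-1 * (u + s) + (1 - 2^-1) * (u - s) = u :> R by field.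
have -> : 2^-1 * (v + t) + (1 - 2^-1) * (v - t) = v :> R by field.
move=> mid; rewrite ler_norml; apply/andP; split; lra.
Qed.

Lemma l_cont u v c : c < l u v -> exists2 d : R, 0 < d &
  forall u' v', `|u' - u| < d -> `|v' - v| < d -> c < l u' v'.
Proof.
move=> hc.
set C := Mbox u v - l u v.
have C0 : 0 <= C.
  have := box_upper u v 0 0; rewrite !addr0 normr0 /C => h.
  by rewrite subr_ge0; apply: h.
set d := Num.min 1 ((l u v - c) / (C + 1)).
have dpos : 0 < d.
  rewrite /d lt_min ltr01 /=; apply: divr_gt0; lra.
exists d => // u' v' hu hv.
have dle1 : d <= 1 by rewrite /d ge_min lexx.
have dle2 : d <= (l u v - c) / (C + 1) by rewrite /d ge_min lexx orbT.
have := local_bound u v (u' - u) (v' - v) d.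
have e1 : u + (u' - u) = u' by rewrite addrC subrK.
have e2 : v + (v' - v) = v' by rewrite addrC subrK.
rewrite e1 e2 => /(_ ltac:(by apply/andP; split) (ltW hu) (ltW hv)).
rewrite ler_norml => /andP[H _].
have : d * C <= (l u v - c) / (C + 1) * C by apply: ler_wpM2r.
have : (l u v - c) / (C + 1) * C < l u v - c.
  have q0 : 0 < (l u v - c) / (C + 1) by apply: divr_gt0; lra.
  have qe : (l u v - c) / (C + 1) * (C + 1) = l u v - c.
    by rewrite divfK //; apply: lt0r_neq0; lra.
  nra.
rewrite /C in H *; lra.
Qed.
End conv.


Lemma pselect_if_T (P : Prop) A (x y : A) : P -> (if pselect P then x else y) = x.
Proof. by move=> p; case: pselect. Qed.
Lemma pselect_if_F (P : Prop) A (x y : A) : ~ P -> (if pselect P then x else y) = y.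
Proof. by move=> p; case: pselect. Qed.

Section meas.
Context (R : realType) (l : R -> R -> R).
Local Notation rr := (@ratr R).
Hypothesis lc : forall u v c, c < l u v -> exists2 d : R, 0 < d &
  forall u' v', `|u' - u| < d -> `|v' - v| < d -> c < l u' v'.

Lemma measurable_l2 dT (T : measurableType dT) (a b : T -> R) :
  measurable_fun setT a -> measurable_fun setT b ->
  measurable_fun setT (fun w => l (a w) (b w)).
Proof.
move=> ma mb; apply: (measurability _ (RGenOInfty.measurableE R)).
move=> _ [_ [c ->] <-]; rewrite setTI preimage_itvoy.
pose S (q1 q2 q3 : rat) : set T :=
  if pselect (0 < rr q3 /\ forall u' v', `|u' - rr q1| < rr q3 ->
     `|v' - rr q2| < rr q3 -> c < l u' v')
  then (a @^-1` `]rr q1 - rr q3, rr q1 + rr q3[) `&`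
       (b @^-1` `]rr q2 - rr q3, rr q2 + rr q3[)
  else set0.
have -> : [set x | c < l (a x) (b x)] =
   \bigcup_(q1 : rat) \bigcup_(q2 : rat) \bigcup_(q3 : rat) S q1 q2 q3.
  apply/seteqP; split => [w /= hw|w [q1 _ [q2 _ [q3 _ Sw]]]].
    have [d d0 hd] := lc _ _ _ hw.
    have d20 : (0 : R) < d / 2 by apply: divr_gt0.
    have /rat_in_itvoo[q3] := d20.
    rewrite in_itv /= => /andP[q30 q3d].
    have /rat_in_itvoo[q1] : a w - rr q3 < a w + rr q3 by lra.
    rewrite in_itv /= => /andP[h1a h1b].
    have /rat_in_itvoo[q2] : b w - rr q3 < b w + rr q3 by lra.
    rewrite in_itv /= => /andP[h2a h2b].
    exists q1 => //; exists q2 => //; exists q3 => //.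
    have cond : 0 < rr q3 /\ forall u' v', `|u' - rr q1| < rr q3 ->
        `|v' - rr q2| < rr q3 -> c < l u' v'.
      split => // u' v'.
      rewrite !ltr_distl => /andP[? ?] /andP[? ?].
      by move=> *; apply: hd; rewrite ltr_distl; apply/andP; split; lra.
    rewrite /S pselect_if_T //.
    by rewrite /= !in_itv /=; split; apply/andP; split; lra.
  have [HP|nP] := pselect (0 < rr q3 /\ forall u' v', `|u' - rr q1| < rr q3 ->
     `|v' - rr q2| < rr q3 -> c < l u' v').
    have [_ H] := HP.
    move: Sw; rewrite /S pselect_if_T // => -[]; rewrite /= !in_itv /= => /andP[? ?] /andP[? ?].
    by apply: H; rewrite ltr_distl; apply/andP; split; lra.
  by move: Sw; rewrite /S pselect_if_F.
apply: bigcupT_measurable_rat => q1; apply: bigcupT_measurable_rat => q2.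
apply: bigcupT_measurable_rat => q3; rewrite /S.
have [HP|nP] := pselect (0 < rr q3 /\ forall u' v', `|u' - rr q1| < rr q3 ->
     `|v' - rr q2| < rr q3 -> c < l u' v'); last by rewrite pselect_if_F.
rewrite pselect_if_T //; apply: measurableI; rewrite -[X in measurable X]setTI.
  by apply: ma => //; exact: measurable_itv.
by apply: mb => //; exact: measurable_itv.
Qed.
End meas.


Lemma bigsetI_memP (I : eqType) (U : Type) (r : seq I) (F : I -> set U) (w : U) :
  (\big[setI/setT]_(n <- r) F n) w <-> (forall n, n \in r -> F n w).
Proof.
elim: r => [|a r IH]; first by rewrite big_nil; split.
rewrite big_cons; split.
  by move=> [h1 /IH h2] n; rewrite in_cons => /orP[/eqP ->|/h2].
move=> h; split; first by apply: h; rewrite in_cons eqxx.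
by apply/IH => n hn; apply: h; rewrite in_cons hn orbT.
Qed.

Section law.
Context (R : realType) (dX : measure_display) (X : measurableType dX)
  (D : probability (X * R)%type R)
  (dO : measure_display) (Omega : measurableType dO) (P : probability Omega R)
  (Z : nat -> Omega -> (X * R)%type) (hZ : iid_draws P D Z).

Local Notation T := (X * R)%type.

Definition Wt (k : nat) (s : nat -> nat) : Omega -> k.-tuple T :=
  fun w => [tuple Z (s i) w | i < k].

Lemma measurable_Wt k s : measurable_fun setT (Wt k s).
Proof.
apply/measurable_fun_tnthP => i.
have -> : (@tnth k T ^~ i \o Wt k s) = Z (s i).
  by apply: funext => w /=; rewrite tnth_mktuple.
by case: hZ.
Qed.

Definition rect k (A : nat -> set T) : set (k.-tuple T) :=
  [set t | forall i : 'I_k, A i (tnth t i)].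

Definition injk (k : nat) (s : nat -> nat) :=
  forall i j, (i < k)%N -> (j < k)%N -> s i = s j -> i = j.

Lemma rect_prob k s (A : nat -> set T) : injk k s ->
  (forall i, measurable (A i)) ->
  P (Wt k s @^-1` rect k A) = (\prod_(i <- iota 0 k) D (A i))%E.
Proof.
move=> inj mA.
have [mZ [dZ indZ]] := hZ.
pose A' n := [set x | forall i : 'I_k, s i = n -> A i x].
have A's : forall i, (i < k)%N -> A' (s i) = A i.
  move=> i ik; apply/seteqP; split => x /=.
    by move=> /(_ (Ordinal ik) erefl).
  by move=> Ax j /inj -> //.
have -> : Wt k s @^-1` rect k A =
    \big[setI/setT]_(n <- [seq s i | i <- iota 0 k]) (Z n @^-1` A' n).
  apply/seteqP; split => w.
    move=> /= h; apply/bigsetI_memP => n /mapP [i].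
    rewrite mem_iota add0n => /andP[_ ik] ->.
    by rewrite /= A's //; have := h (Ordinal ik); rewrite tnth_mktuple.
  move=> /bigsetI_memP h i /=; rewrite tnth_mktuple.
  rewrite -A's //; apply: h; apply/mapP; exists (nat_of_ord i) => //.
  by rewrite mem_iota add0n ltn_ord.
rewrite indZ; last 2 first.
- rewrite map_inj_in_uniq ?iota_uniq // => i j; rewrite !mem_iota !add0n /=.
  by move=> ? ?; apply: inj.
- move=> n /mapP [i]; rewrite mem_iota add0n => /andP[_ ik] ->.
  by rewrite A's.
rewrite big_map; apply: eq_big_seq => i; rewrite mem_iota add0n => /andP[_ ik].
by rewrite A's // dZ.
Qed.

Definition Grect k : set (set (k.-tuple T)) :=
  [set B | exists A : nat -> set T, (forall i, measurable (A i)) /\ B = rect k A].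

Lemma rect_measurable k A : (forall i, measurable (A i)) -> measurable (rect k A).
Proof.
move=> mA.
have -> : rect k A = \big[setI/setT]_(i <- enum 'I_k) (@tnth k T ^~ i @^-1` A i).
  apply/seteqP; split => t.
    move=> h; apply/bigsetI_memP => i _; exact: h.
  by move=> /bigsetI_memP h i; apply: h; rewrite mem_enum.
apply: bigsetI_measurable => i _; rewrite -[X in measurable X]setTI.
exact: measurable_tnth.
Qed.

Lemma Grect_gen n : measurable = <<s Grect n.+1 >>.
Proof.
apply/seteqP; split; last first.
  apply: smallest_sub; first exact: sigma_algebra_measurable.
  by move=> B [A [mA ->]]; exact: rect_measurable.
apply: smallest_sub; first exact: smallest_sigma_algebra.
rewrite -bigcup_mkord_ord => B [i _ [Y mY <-]].
apply: sub_sigma_algebra.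
set i0 : 'I_n.+1 := inord i.
exists (fun j => if j == val i0 then Y else setT); split.
  by move=> j; case: ifP.
apply/seteqP; split => t /=.
  move=> [_ Yt] j; case: ifP => // /eqP /val_inj ->; exact: Yt.
by move=> h; split => //; have := h i0; rewrite eqxx.
Qed.

Definition Wmf k s : {mfun Omega >-> k.-tuple T} :=
  HB.pack (Wt k s) (isMeasurableFun.Build _ _ _ _ (Wt k s) (measurable_Wt k s)).

Lemma law_eq n s1 s2 : injk n.+1 s1 -> injk n.+1 s2 ->
  forall B, measurable B -> P (Wt n.+1 s1 @^-1` B) = P (Wt n.+1 s2 @^-1` B).
Proof.
move=> i1 i2 B mB.
have setIG : setI_closed (Grect n.+1).
  move=> _ _ [A1 [mA1 ->]] [A2 [mA2 ->]].
  exists (fun i => A1 i `&` A2 i); split; first by move=> i; exact: measurableI.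
  apply/seteqP; split => t /=.
    by move=> [h1 h2] i; split; [exact: h1|exact: h2].
  by move=> h; split => i; have [] := h i.
have GT : forall i : nat, Grect n.+1 ((fun _ => setT) i).
  move=> _; exists (fun _ => setT); split => //.
  by apply/seteqP; split.
have cover : \bigcup_k (fun _ : nat => [set: n.+1.-tuple T]) k = setT.
  by apply/seteqP; split => // t _; exists 0%N.
have m1m2 : forall A, Grect n.+1 A ->
    distribution P (Wmf n.+1 s1) A = distribution P (Wmf n.+1 s2) A.
  move=> _ [A [mA ->]].
  rewrite /distribution /pushforward /=.
  by rewrite (@rect_prob n.+1 s1 A i1 mA) (@rect_prob n.+1 s2 A i2 mA).
have fin : forall k : nat, (distribution P (Wmf n.+1 s1) ((fun _ => setT) k) < +oo)%E.
  move=> _; rewrite /distribution /pushforward /= preimage_setT probability_setT.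
  exact: ltry.
exact: (measure_unique (Grect n.+1) (fun _ => setT) (Grect_gen n) setIG GT cover _ _ m1m2 fin B mB).
Qed.

End law.


Section expect.
Context (R : realType) (dX : measure_display) (X : measurableType dX)
  (D : probability (X * R)%type R)
  (dO : measure_display) (Omega : measurableType dO) (P : probability Omega R)
  (Z : nat -> Omega -> (X * R)%type) (hZ : iid_draws P D Z)
  (l : R -> R -> R) (hl : doubly_convex l) (f : X -> R)
  (mf : measurable_fun setT f).

Local Notation T := (X * R)%type.
Local Notation W := (@Wt R dX X dO Omega Z).
Local Notation Wm := (@Wmf R dX X D dO Omega P Z hZ).

Definition gk k (t : k.-tuple T) : R :=
  l (k%:R^-1 * \sum_(i < k) f (tnth t i).1) (k%:R^-1 * \sum_(i < k) (tnth t i).2).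

Lemma measurable_gk k : measurable_fun setT (@gk k).
Proof.
apply: (@measurable_l2 R l (@l_cont R l hl)).
  apply: measurable_funM => //; apply: measurable_sum => i.
  apply: measurableT_comp => //; apply: measurableT_comp => //.
  exact: measurable_tnth.
apply: measurable_funM => //; apply: measurable_sum => i.
apply: measurableT_comp => //; exact: measurable_tnth.
Qed.

Lemma k_loss_gk k : k_loss Z l f k = @gk k \o W k id.
Proof.
apply: funext => w; rewrite /k_loss /gk /emp_mean /=.
by congr l; congr (_ * _); apply: eq_bigr => i _; rewrite tnth_mktuple.
Qed.

Lemma window_int n s : injk n.+1 s ->
  P.-integrable setT (EFin \o k_loss Z l f n.+1) ->
  P.-integrable setT (EFin \o (@gk n.+1 \o W n.+1 s)) /\
  (\int[P]_w (@gk n.+1 (W n.+1 s w))%:E = 'E_P[k_loss Z l f n.+1])%E.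
Proof.
move=> inj hint.
have idinj : injk n.+1 id by move=> i j _ _.
rewrite k_loss_gk in hint *.
have mg := @measurable_gk n.+1.
have mgE : measurable_fun setT (EFin \o @gk n.+1) by apply/measurable_EFinP.
have eqm : forall B, measurable B ->
    distribution P (Wm n.+1 s) B = distribution P (Wm n.+1 id) B.
  by move=> B mB; exact: (@law_eq R dX X D dO Omega P Z hZ n s id inj idinj B mB).
have mabs : measurable_fun setT (fun t => `|(EFin \o @gk n.+1) t|%E).
  exact: measurableT_comp.
have abs_eq : forall s', (\int[P]_w `|(EFin \o (@gk n.+1 \o W n.+1 s')) w|
    = \int[distribution P (Wm n.+1 s')]_t `|(EFin \o @gk n.+1) t|)%E.
  move=> s'; rewrite ge0_integral_distribution //.
have int_s : P.-integrable setT (EFin \o (@gk n.+1 \o W n.+1 s)).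
  apply/integrableP; split.
    apply/measurable_EFinP; apply: measurableT_comp => //.
    exact: (@measurable_Wt R dX X D dO Omega P Z hZ).
  rewrite abs_eq (eq_measure_integral (distribution P (Wm n.+1 id))); last first.
    by move=> A mA _; apply: eqm.
  by rewrite -abs_eq; case/integrableP: hint.
split => //.
rewrite unlock /=.
have e1 := @integral_distribution _ _ _ _ _ P (Wm n.+1 s) (EFin \o @gk n.+1) mgE int_s.
have e2 := @integral_distribution _ _ _ _ _ P (Wm n.+1 id) (EFin \o @gk n.+1) mgE hint.
transitivity (\int[distribution P (Wm n.+1 s)]_y (EFin \o @gk n.+1) y)%E.
  by symmetry; exact: e1.
rewrite (eq_measure_integral (distribution P (Wm n.+1 id))); last first.
  by move=> A mA _; apply: eqm.
exact: e2.
Qed.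

End expect.


Lemma jensen_l (R : realType) (l : R -> R -> R) (hl : doubly_convex l) (m : nat)
  (a b : nat -> R) :
  l (m.+1%:R^-1 * \sum_(j < m.+1) a j) (m.+1%:R^-1 * \sum_(j < m.+1) b j)
  <= m.+1%:R^-1 * \sum_(j < m.+1) l (a j) (b j).
Proof.
elim: m => [|m IH].
  by rewrite !big_ord_recr /= !big_ord0 !add0r invr1 !mul1r.
set M : R := m.+1%:R.
have M0 : 0 < M by rewrite /M ltr0n.
have N0 : 0 < m.+2%:R :> R by rewrite ltr0n.
have NM : m.+2%:R = M + 1 :> R by rewrite /M -natr1.
set mu : R := M / m.+2%:R.
have hmu : 0 <= mu <= 1.
  apply/andP; split; first by rewrite /mu divr_ge0 // ltW.
  by rewrite /mu ler_pdivrMr // mul1r NM; lra.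
have key : forall c : nat -> R, m.+2%:R^-1 * \sum_(j < m.+2) c j =
    mu * (M^-1 * \sum_(j < m.+1) c j) + (1 - mu) * c m.+1.
  move=> c; rewrite big_ord_recr /= /mu NM.
  field; have m0 := ler0n R m; apply/andP; split; apply: lt0r_neq0; lra.
rewrite !key.
apply: le_trans (hl _ _ _ _ _ hmu) _.
have h1mu : 0 <= 1 - mu by case/andP: hmu => _; rewrite subr_ge0.
have hmu0 : 0 <= mu by case/andP: hmu.
rewrite (key (fun j => l (a j) (b j))).
by apply: lerD; [apply: ler_wpM2l|].
Qed.

Lemma window_sum (R : realType) (K k : nat) (x : nat -> R) : (0 < K)%N ->
  \sum_(j < K) \sum_(i < k) x ((j + i) %% K)%N = k%:R * \sum_(j < K) x j.
Proof.
move=> K0.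
rewrite exchange_big /=.
have -> : \sum_(i < k) \sum_(j < K) x ((j + i) %% K)%N = \sum_(i < k) \sum_(j < K) x j.
  apply: eq_bigr => i _.
  pose h (j : 'I_K) : 'I_K := Ordinal (ltn_pmod (j + i)%N K0).
  have hinj : injective h.
    move=> j1 j2 /(congr1 val) /= /eqP.
    rewrite eqn_modDr !modn_small // => /eqP; exact: val_inj.
  by rewrite [RHS](reindex_inj hinj).
by rewrite sumr_const card_ord mulr_natl.
Qed.

Lemma natmul_EFin (R : realType) (x : R) n : ((x%:E) *+ n)%R = (x *+ n)%:E.
Proof. by elim: n => // n IH; rewrite !mulrS IH. Qed.

Theorem mainTheorem5 (R : realType) (dX : measure_display) (X : measurableType dX)
    (D : probability (X * R)%type R)
    (dO : measure_display) (Omega : measurableType dO) (P : probability Omega R)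
    (Z : nat -> Omega -> (X * R)%type)
    (l : R -> R -> R) (f : X -> R) (k k' : nat) :
  iid_draws P D Z ->
  doubly_convex l ->
  measurable_fun setT f ->
  (1 <= k)%N -> (k <= k')%N ->
  P.-integrable setT (EFin \o k_loss Z l f k) ->
  P.-integrable setT (EFin \o k_loss Z l f k') ->
  (k_risk P Z l f k' <= k_risk P Z l f k)%E.
Proof.
move=> hZ hl mf k1 kk' intk intk'.
case: k k1 kk' intk => // n _ kk' intk.
case: k' kk' intk' => [//|m] kk' intk'.
pose K := m.+1.
pose s (j : nat) := fun i => ((j + i) %% K)%N.
have sinj : forall j, injk n.+1 (s j).
  move=> j i1 i2 h1 h2 /eqP; rewrite /s eqn_modDl.
  have e1 : (i1 %% K = i1)%N by apply: modn_small; rewrite /K; lia.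
  have e2 : (i2 %% K = i2)%N by apply: modn_small; rewrite /K; lia.
  by rewrite e1 e2 => /eqP.
pose G := @gk R dX X l f n.+1.
pose W := @Wt R dX X dO Omega Z n.+1.
have WI := fun j => @window_int R dX X D dO Omega P Z hZ l hl f mf n (s j) (sinj j) intk.
have bound : forall w, k_loss Z l f K w <= K%:R^-1 * \sum_(j < K) G (W (s j) w).
  move=> w; rewrite /k_loss /emp_mean.
  have hmean : forall x : nat -> R, K%:R^-1 * \sum_(j < K) x j =
      K%:R^-1 * \sum_(j < K) (n.+1%:R^-1 * \sum_(i < n.+1) x ((j + i) %% K)%N).
    move=> x; congr (_ * _); rewrite -mulr_sumr window_sum // mulrA mulVf ?mul1r //.
  rewrite (hmean (fun i => f (Z i w).1)) (hmean (fun i => (Z i w).2)).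
  have -> : \sum_(j < K) G (W (s j) w) = \sum_(j < K)
      l (n.+1%:R^-1 * \sum_(i < n.+1) f (Z ((j + i) %% K)%N w).1)
        (n.+1%:R^-1 * \sum_(i < n.+1) (Z ((j + i) %% K)%N w).2).
    apply: eq_bigr => j _; rewrite /G /gk; congr l; congr (_ * _);
      by apply: eq_bigr => i _; rewrite /W tnth_mktuple.
  exact: (@jensen_l R l hl m (fun j => n.+1%:R^-1 * \sum_(i < n.+1) f (Z ((j + i) %% K)%N w).1) (fun j => n.+1%:R^-1 * \sum_(i < n.+1) (Z ((j + i) %% K)%N w).2)).
set r := k_risk P Z l f n.+1.
have rfin : r \is a fin_num.
  by rewrite /r /k_risk unlock; exact: (integrable_fin_num measurableT intk).
have intj : forall j : 'I_K, P.-integrable setT (fun w => (G (W (s j) w))%:E).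
  by move=> j; case: (WI j).
have Ej : forall j : 'I_K, (\int[P]_w (G (W (s j) w))%:E)%E = r.
  by move=> j; case: (WI j).
have feq : (fun w => (K%:R^-1 * \sum_(j < K) G (W (s j) w))%:E) =
    (fun w => (K%:R^-1)%:E * \sum_(j < K) (G (W (s j) w))%:E)%E.
  by apply: funext => w; rewrite EFinM sumEFin.
have intS : P.-integrable setT (fun w => (K%:R^-1 * \sum_(j < K) G (W (s j) w))%:E).
  rewrite feq; apply: (integrableZl measurableT); apply: (integrable_sum measurableT) => j _; exact: intj.
rewrite /k_risk.
apply: (@le_trans _ _ (\int[P]_w (K%:R^-1 * \sum_(j < K) G (W (s j) w))%:E)%E).
  rewrite unlock; apply: le_integral => //.
  by move=> w _; rewrite lee_fin; exact: bound.
rewrite feq integralZl //; last by apply: (integrable_sum measurableT) => j _; exact: intj.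
rewrite integral_sum //; under eq_bigr do rewrite Ej.
rewrite sumr_const card_ord; clear Ej; move: rfin; clearbody r; case: r => // x _.
rewrite natmul_EFin -EFinM lee_fin.
by rewrite -[x *+ K]mulr_natl mulKf ?pnatr_eq0.
Qed.
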